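(* Assume the setting and hypotheses of the context (continuity of the regularization at $P$ w.r.t. $d$, $d(P_n,P)=o_P(r_n^{-1})$ with $(r_n)$ positive diverging, and the majorants $\bar B,\bar\delta$, grids $\mathcal{G}_n$ and choice $\tilde k_n$ defined there). Suppose moreover that $k\mapsto\bar\delta_k(t)$ and $k\mapsto\bar B_k(P)$ are continuous, that the sets $$\mathcal{G}_n^+=\{k\in\mathcal{G}_n:\bar\delta_k(r_n^{-1})\ge\bar B_k(P)\},\qquad\mathcal{G}_n^-=\{k\in\mathcal{G}_n:\bar\delta_k(r_n^{-1})\le\bar B_k(P)\}$$ are non-empty, and that $$\frac{\min_{k\in\mathcal{G}_n^+}\bar\delta_k(r_n^{-1})}{\max_{k\in\mathcal{G}_n^-}\bar\delta_k(r_n^{-1})}=O(1).$$ Then $$\|\psi_{\tilde k_n}(P_n)-\psi(P)\|_\Theta=O_P\left(\inf_{k\in\mathbb{R}_+}\{\bar\delta_k(r_n^{-1})+\bar B_k(P)\}\right).$$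
   Context: Setting: $\mathbb{Z}\subseteq\mathbb{R}^d$; data IID with law $P\in\mathcal{M}$; $\mathbf{P}$ the product probability on $\mathbb{Z}^\infty$ (to which $o_P,O_P$ refer); $ca(\mathbb{Z})$ signed Borel measures of finite variation; $\mathcal{D}$ discretely supported probability measures; $P_n$ the empirical distribution. $\mathcal{M}$ a set of Borel probability measures, $\psi:\mathcal{M}\to\Theta$, $(\Theta,\|\cdot\|_\Theta)$ a normed space, $\mathbb{K}\subseteq\mathbb{R}_+$ unbounded above. A regularization is a family $(\psi_k)_{k\in\mathbb{K}}$, $\psi_k:\mathbb{D}_\psi\subseteq ca(\mathbb{Z})\to\Theta$, $\mathbb{D}_\psi\supseteq\mathcal{M}\cup\mathcal{D}$, with $\|\psi_k(Q)-\psi(Q)\|_\Theta\to0$ for all $Q\in\mathcal{M}$. A modulus of continuity is a continuous non-decreasing $f:\mathbb{R}_+\to\mathbb{R}_+$ with $f(t)=0$ iff $t=0$; the regularization is continuous at $P$ w.r.t. a distance $d$ if there are moduli $(\delta_k)$ with $\|\psi_k(P')-\psi_k(P)\|_\Theta\le\delta_k(d(P',P))$ for all $k$ and $P'\in\mathbb{D}_\psi$. Assume this, and that $(r_n)$ is a positive diverging sequence with $d(P_n,P)=o_P(r_n^{-1})$. $k\mapsto\bar B_k(P)$ is non-increasing $\mathbb{R}_+\to\mathbb{R}_+$ with $\bar B_k(P)\ge\|\psi_k(P)-\psi(P)\|_\Theta$ and $\bar B_k(P)\to0$; for each $n$, $k\mapsto\bar\delta_k(r_n^{-1})$ is non-decreasing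 $\mathbb{R}_+\to\mathbb{R}_+$ with $\bar\delta_k(r_n^{-1})\ge\delta_k(r_n^{-1})$. $\mathcal{G}_n$ is a finite subset of $\mathbb{K}$, $\mathcal{L}_n=\{k\in\mathcal{G}_n:\|\psi_k(P_n)-\psi_{k'}(P_n)\|_\Theta\le4\bar\delta_{k'}(r_n^{-1})\ \forall k'\ge k,\ k'\in\mathcal{G}_n\}$, and $\tilde k_n=\min\mathcal{L}_n$. *)

(* Defs.v *)
From HB Require Import structures.
From mathcomp Require Import all_boot all_order all_algebra.
From mathcomp Require Import all_classical all_reals all_analysis.
Set Implicit Arguments. Unset Strict Implicit. Unset Printing Implicit Defensive.
Import Order.TTheory GRing.Theory Num.Theory.
Import numFieldNormedType.Exports.
Local Open Scope classical_set_scope.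
Local Open Scope ring_scope.

Section Defs.
Context {R : realType}.

Section SetFun.
Context {dT : measure_display} {T : measurableType dT}.

Definition is_ca (Q : set T -> R) : Prop :=
  exists c : {charge set T -> \bar R}, forall A, (Q A)%:E = c A.

Definition is_prob (Q : set T -> R) : Prop :=
  exists p : probability T R, forall A, (Q A)%:E = p A.

Definition is_discrete_prob (Q : set T -> R) : Prop :=
  exists (x : nat -> T) (w : nat -> R),
    (forall i, 0 <= w i) /\
    (series w @ \oo --> (1 : R)) /\
    (forall A, series (fun i => w i * \1_A (x i)) @ \oo --> Q A).

Definition empirical {dO : measure_display} {O : measurableType dO}
  (X : nat -> O -> T) (n : nat) (w : O) : set T -> R :=
  fun A => n%:R^-1 * \sum_(i < n) \1_A (X i w).

End SetFun.

Section Prob.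
Context {dO : measure_display} {O : measurableType dO} (Pr : probability O R).

Definition Pout (A : set O) : \bar R :=
  ereal_inf [set Pr B | B in [set B | measurable B /\ A `<=` B]].

Definition is_oP (Y : nat -> O -> R) (a : nat -> R) : Prop :=
  forall eps : R, 0 < eps -> forall eta : R, 0 < eta ->
    \forall n \near \oo, (Pout [set w | (eps * a n < `|Y n w|)%R] <= eta%:E)%E.

Definition is_OP (Y : nat -> O -> R) (a : nat -> R) : Prop :=
  forall eta : R, 0 < eta -> exists M : R,
    \forall n \near \oo, (Pout [set w | (M * a n < `|Y n w|)%R] <= eta%:E)%E.

Definition iid_with_law {dT : measure_display} {T : measurableType dT}
  (X : nat -> O -> T) (Q : set T -> R) : Prop :=
  (forall i, measurable_fun setT (X i)) /\
  (forall i A, measurable A -> Pr (X i @^-1` A) = (Q A)%:E) /\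
  (forall (I : seq nat) (A : nat -> set T), uniq I ->
     (forall i, measurable (A i)) ->
     Pr (\bigcap_(i in [set` I]) (X i @^-1` A i)) =
       (\prod_(i <- I) fine (Pr (X i @^-1` A i)))%:E).

End Prob.

Definition modulus (f : R -> R) : Prop :=
  {within `[0, +oo[, continuous f} /\
  {in `[0, +oo[ &, {homo f : s t / s <= t}} /\
  (forall t, 0 <= t -> 0 <= f t) /\
  (forall t, 0 <= t -> (f t = 0 <-> t = 0)).

Definition seqmin (s : seq R) : R := foldr Num.min (head 0 s) s.
Definition seqmax (s : seq R) : R := foldr Num.max (head 0 s) s.

End Defs.

(* Main.v *)
Require Import Defs.
From HB Require Import structures.
From mathcomp Require Import all_boot all_order all_algebra.
From mathcomp Require Import all_classical all_reals all_analysis.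
From mathcomp Require Import lra.
Import Order.TTheory GRing.Theory Num.Theory.
Import numFieldNormedType.Exports.
Local Open Scope classical_set_scope.
Local Open Scope ring_scope.

Section Aux.
Context {R : realType}.

Lemma foldr_min_le (s : seq R) x0 x : x \in s -> foldr Num.min x0 s <= x.
Proof.
elim: s => //= a s IH; rewrite in_cons => /orP[/eqP ->|xs].
  by rewrite ge_min lexx.
by rewrite ge_min IH ?orbT.
Qed.

Lemma foldr_min_in (s : seq R) x0 : foldr Num.min x0 s \in x0 :: s.
Proof.
elim: s => [|a s IH] /=; first by rewrite mem_seq1.
rewrite /Num.min; case: ifP => _; first by rewrite !inE eqxx orbT.
move: IH; rewrite !inE => /orP[->|->]; by rewrite ?orbT.
Qed.

Lemma seqmin_in (s : seq R) : s != [::] -> seqmin s \in s.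
Proof.
case: s => // a s _; rewrite /seqmin /=.
have := foldr_min_in s a; rewrite inE => /orP[/eqP ->|h].
  by rewrite minxx inE eqxx.
rewrite /Num.min; case: ifP => _; by rewrite inE ?eqxx ?h ?orbT.
Qed.

Lemma seqmin_le (s : seq R) x : x \in s -> seqmin s <= x.
Proof. exact: foldr_min_le. Qed.

Lemma foldr_max_in (s : seq R) x0 : foldr Num.max x0 s \in x0 :: s.
Proof.
elim: s => [|a s IH] /=; first by rewrite mem_seq1.
rewrite /Num.max; case: ifP => _; last by rewrite !inE eqxx orbT.
move: IH; rewrite !inE => /orP[->|->]; by rewrite ?orbT.
Qed.

Lemma seqmax_in (s : seq R) : s != [::] -> seqmax s \in s.
Proof.
case: s => // a s _; rewrite /seqmax /=.
have := foldr_max_in s a; rewrite inE => /orP[/eqP ->|h].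
  by rewrite maxxx inE eqxx.
rewrite /Num.max; case: ifP => _; by rewrite inE ?eqxx ?h ?orbT.
Qed.

Lemma sum_trunc (f : nat -> R) (n N : nat) : (n <= N)%N ->
  \sum_(0 <= i < N) (if (i < n)%N then f i else 0) = \sum_(i < n) f i.
Proof.
move=> nN; rewrite (big_cat_nat (leq0n n) nN) /=.
have -> : \sum_(n <= i < N) (if (i < n)%N then f i else 0) = 0.
  rewrite big_nat_cond big1 // => i /andP[/andP[ni _] _].
  by rewrite ltnNge ni.
rewrite addr0 big_mkord; apply: eq_bigr => i _; by rewrite ltn_ord.
Qed.

Lemma empirical_discrete {dT : measure_display} {T : measurableType dT}
  {dO : measure_display} {O : measurableType dO}
  (X : nat -> O -> T) n w : (1 <= n)%N -> is_discrete_prob (empirical X n w : set T -> R).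
Proof.
move=> n1.
exists (fun i => X i w), (fun i => if (i < n)%N then n%:R^-1 else 0).
split; first by move=> i; case: ifP => // _; rewrite invr_ge0 ler0n.
split.
  apply: cvg_near_cst; near=> N.
  rewrite /series /= sum_trunc; last by near: N; exact: nbhs_infty_ge.
  rewrite sumr_const card_ord -[_ *+ _]mulr_natr mulVf //.
  by rewrite pnatr_eq0 -lt0n.
move=> A; apply: cvg_near_cst; near=> N.
rewrite /series /= /empirical.
rewrite (eq_bigr (fun i => if (i < n)%N then n%:R^-1 * \1_A (X i w) else 0)); last first.
  by move=> i _; case: ifP => _ //; rewrite mul0r.
rewrite sum_trunc ?mulr_sumr //.
by near: N; exact: nbhs_infty_ge.
Unshelve. all: by end_near.
Qed.

End Aux.
Arguments seqmin_in {R s}.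
Arguments seqmax_in {R s}.
Arguments seqmin_le {R s x}.

Lemma Pout_mono {R : realType} {dO : measure_display} {O : measurableType dO}
  (Pr : probability O R) (A B : set O) : A `<=` B -> (Pout Pr A <= Pout Pr B)%E.
Proof.
move=> AB; rewrite /Pout; apply: ereal_inf_le_tmp.
move=> _ [C [mC BC] <-]; exists C => //; split => //; exact: subset_trans BC.
Qed.
Lemma tri3 {R : realType} (V : normedModType R) (a b c d : V) :
  `|a - d| <= `|a - b| + `|b - c| + `|c - d|.
Proof.
apply: le_trans (ler_distD b a d) _; rewrite -addrA lerD2l; exact: ler_distD.
Qed.

Lemma tri4 {R : realType} (V : normedModType R) (a b c d e : V) :
  `|a - e| <= `|a - b| + `|b - c| + `|c - d| + `|d - e|.
Proof.
apply: le_trans (ler_distD d a e) _; rewrite lerD2r; exact: tri3.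
Qed.

Theorem proposition2
  (R : realType)
  (dT : measure_display) (T : measurableType dT)          (* sample space Z *)
  (dO : measure_display) (O : measurableType dO)          (* underlying probability space *)
  (Pr : probability O R)
  (Mset : set (set T -> R))                               (* the model M *)
  (Dpsi : set (set T -> R))                               (* the domain D_psi *)
  (Theta : normedModType R)
  (psi : (set T -> R) -> Theta)
  (K : set R)
  (psik : R -> (set T -> R) -> Theta)                     (* psik k = psi_k *)
  (dist : (set T -> R) -> (set T -> R) -> R)             (* the distance d *)
  (P : set T -> R)
  (X : nat -> O -> T)                                     (* the data *)
  (delta : R -> R -> R)                                   (* moduli delta_k *)
  (r : nat -> R)
  (Bbar : R -> R)                                         (* k |-> Bbar_k(P) *)
  (dbar : R -> R -> R)                                    (* dbar k t = dbar_k(t) *)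
  (G : nat -> seq R)                                      (* grids G_n *)
  (* the model and the domain of the regularization *)
  (hM : Mset `<=` [set Q | is_prob Q])
  (hP : Mset P)
  (hDca : Dpsi `<=` [set Q | is_ca Q])
  (hDM : Mset `<=` Dpsi)
  (hDD : [set Q | is_discrete_prob Q] `<=` Dpsi)
  (* K is a subset of R_+ unbounded above *)
  (hK0 : K `<=` [set k | 0 <= k])
  (hKunb : forall M : R, exists k, K k /\ M < k)
  (* (psik)_k is a regularization of psi *)
  (hreg : forall Q, Mset Q -> forall eps : R, 0 < eps ->
      exists k0 : R, forall k, K k -> k0 <= k -> `|psik k Q - psi Q| < eps)
  (* IID data with law P *)
  (hiid : iid_with_law Pr X P)
  (* d is a distance on D_psi *)
  (hd0 : forall Q Q', Dpsi Q -> Dpsi Q' -> 0 <= dist Q Q')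
  (hdrefl : forall Q, Dpsi Q -> dist Q Q = 0)
  (hdsym : forall Q Q', Dpsi Q -> Dpsi Q' -> dist Q Q' = dist Q' Q)
  (hdtri : forall Q1 Q2 Q3, Dpsi Q1 -> Dpsi Q2 -> Dpsi Q3 ->
      dist Q1 Q3 <= dist Q1 Q2 + dist Q2 Q3)
  (* continuity of the regularization at P w.r.t. d *)
  (hmod : forall k, K k -> modulus (delta k))
  (hcont : forall k Q, K k -> Dpsi Q -> `|psik k Q - psik k P| <= delta k (dist Q P))
  (* (r_n) positive diverging, d(P_n, P) = o_P(1 / r_n) *)
  (hrpos : forall n, 0 < r n)
  (hrdiv : forall M : R, \forall n \near \oo, M < r n)
  (hrate : is_oP Pr (fun n w => dist (empirical X n w) P) (fun n => (r n)^-1))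
  (* the bias majorant Bbar *)
  (hB0 : forall k, 0 <= k -> 0 <= Bbar k)
  (hBmono : {in `[0, +oo[ &, {homo Bbar : s t /~ s <= t}})
  (hBmaj : forall k, K k -> `|psik k P - psi P| <= Bbar k)
  (hBlim : forall eps : R, 0 < eps -> exists k0 : R, forall k, k0 <= k -> Bbar k < eps)
  (hBcont : {within `[0, +oo[, continuous Bbar})
  (* the variance majorant dbar *)
  (hdb0 : forall n k, 0 <= k -> 0 <= dbar k (r n)^-1)
  (hdbmono : forall n, {in `[0, +oo[ &, {homo (fun k => dbar k (r n)^-1) : s t / s <= t}})
  (hdbmaj : forall n k, K k -> delta k (r n)^-1 <= dbar k (r n)^-1)
  (hdbcont : forall n, {within `[0, +oo[, continuous (fun k => dbar k (r n)^-1)})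
  (* the grids *)
  (hG : forall n k, k \in G n -> K k)
  (hGplus : forall n, exists k, k \in G n /\ Bbar k <= dbar k (r n)^-1)
  (hGminus : forall n, exists k, k \in G n /\ dbar k (r n)^-1 <= Bbar k)
  (hratio : exists C : R, \forall n \near \oo,
      `| seqmin [seq dbar k (r n)^-1 | k <- G n & Bbar k <= dbar k (r n)^-1]
         / seqmax [seq dbar k (r n)^-1 | k <- G n & dbar k (r n)^-1 <= Bbar k] | <= C) :
  let Pn := fun n w => empirical X n w in
  let ktilde := fun n w =>
    seqmin [seq k <- G n | all (fun k' => (k <= k') ==>
              (`|psik k (Pn n w) - psik k' (Pn n w)| <= 4 * dbar k' (r n)^-1)) (G n)] in
  is_OP Pr (fun n w => `|psik (ktilde n w) (Pn n w) - psi P|)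
           (fun n => inf [set dbar k (r n)^-1 + Bbar k | k in [set k : R | 0 <= k]]).
Proof.
move=> Pn ktilde eta eta0.
have [C hC] := hratio.
exists (6 * C).
have H1 := hrate 1 ltr01 eta eta0.
have H0 := nbhs_infty_ge 1.
apply: (@filterS3 _ _ _ _ _ _ _ _ hC H1 H0) => n hCn H1n n1.
apply: le_trans H1n; apply: Pout_mono.
move=> w /= Hw; rewrite ltNge; apply/negP => Hd; move: Hw; rewrite ltNge => /negP; apply.
have ht : 0 < (r n)^-1 by rewrite invr_gt0.
have PnD : Dpsi (Pn n w) by apply: hDD; exact: empirical_discrete.
have PD : Dpsi P by apply: hDM.
have d0 : 0 <= dist (empirical X n w) P := hd0 _ _ PnD PD.
rewrite mul1r ger0_norm // in Hd.
have V : forall k, K k -> `|psik k (Pn n w) - psik k P| <= dbar k (r n)^-1.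
  move=> k Kk; apply: le_trans (hcont _ _ Kk PnD) _; apply: le_trans (hdbmaj n _ Kk).
  by apply: (hmod k Kk).2.1 => //; rewrite in_itv /= andbT // ltW.
rewrite normr_id.
have in0 : forall x : R, 0 <= x -> x \in `[0, +oo[ by move=> x x0; rewrite in_itv /= andbT.
have hp : [seq dbar k (r n)^-1 | k <- G n & Bbar k <= dbar k (r n)^-1] != [::].
  have [k [kG kB]] := hGplus n.
  have kin : dbar k (r n)^-1 \in [seq dbar k (r n)^-1 | k <- G n & Bbar k <= dbar k (r n)^-1].
    by apply: map_f; rewrite mem_filter kB kG.
  by apply/eqP => E; rewrite E in kin.
have hm : [seq dbar k (r n)^-1 | k <- G n & dbar k (r n)^-1 <= Bbar k] != [::].
  have [k [kG kB]] := hGminus n.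
  have kin : dbar k (r n)^-1 \in [seq dbar k (r n)^-1 | k <- G n & dbar k (r n)^-1 <= Bbar k].
    by apply: map_f; rewrite mem_filter kB kG.
  by apply/eqP => E; rewrite E in kin.
have [kp] := mapP (seqmin_in hp); rewrite mem_filter => /andP[kpB kpG] eqp.
have [km] := mapP (seqmax_in hm); rewrite mem_filter => /andP[kmB kmG] eqm.
have Kkp := hG n kp kpG; have Kkm := hG n km kmG.
have kp0 : 0 <= kp := hK0 _ Kkp.
have km0 : 0 <= km := hK0 _ Kkm.
have kmpos : 0 < dbar km (r n)^-1.
  have [dl0 deq] := (hmod km Kkm).2.2.
  have dpos : 0 < delta km (r n)^-1.
    rewrite lt0r dl0 ?ltW // andbT; apply/eqP => /(deq _ (ltW ht)) h.
    by move: ht; rewrite h ltxx.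
  exact: lt_le_trans dpos (hdbmaj n km Kkm).
have C0 : 0 <= C := le_trans (normr_ge0 _) hCn.
have kpC : dbar kp (r n)^-1 <= C * dbar km (r n)^-1.
  have q0 : 0 <= dbar kp (r n)^-1 / dbar km (r n)^-1.
    by rewrite divr_ge0 ?hdb0 // ltW.
  rewrite eqp eqm ger0_norm // in hCn.
  by rewrite -(ler_pdivrMr _ _ kmpos).
have kminf : dbar km (r n)^-1 <= inf [set dbar k (r n)^-1 + Bbar k | k in [set k | 0 <= k]].
  apply: lb_le_inf; first by exists (dbar 0 (r n)^-1 + Bbar 0); exists 0 => //=.
  move=> _ [k /= k0 <-].
  have dk0 := hdb0 n k k0; have bk0 := hB0 k k0.
  case: (leP k km) => hk.
    have := hBmono _ _ (in0 _ km0) (in0 _ k0) hk; lra.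
  have := hdbmono n _ _ (in0 _ km0) (in0 _ k0) (ltW hk); lra.
have kpL : kp \in [seq k <- G n | all (fun k' => (k <= k') ==>
              (`|psik k (Pn n w) - psik k' (Pn n w)| <= 4 * dbar k' (r n)^-1)) (G n)].
  rewrite mem_filter kpG andbT; apply/allP => k' k'G; apply/implyP => kpk'.
  have Kk' := hG n k' k'G; have k'0 : 0 <= k' := hK0 _ Kk'.
  have e1 := V kp Kkp; have e2 := V k' Kk'.
  have b1 := hBmaj kp Kkp; have b2 := hBmaj k' Kk'.
  have m1 := hBmono _ _ (in0 _ k'0) (in0 _ kp0) kpk'.
  have m2 := hdbmono n _ _ (in0 _ kp0) (in0 _ k'0) kpk'.
  have := @tri4 _ Theta (psik kp (Pn n w)) (psik kp P) (psi P) (psik k' P) (psik k' (Pn n w)).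
  rewrite (distrC (psik k' P) (psik k' (Pn n w))) (distrC (psi P)); lra.
have hL : [seq k <- G n | all (fun k' => (k <= k') ==>
              (`|psik k (Pn n w) - psik k' (Pn n w)| <= 4 * dbar k' (r n)^-1)) (G n)] != [::].
  by apply/eqP => E; rewrite E in kpL.
have ktin := seqmin_in hL.
have ktle := seqmin_le kpL.
rewrite -/(ktilde n w) in ktin ktle.
move: ktin; rewrite mem_filter => /andP[/allP hall ktG].
have := hall kp kpG; rewrite ktle /= => hk.
have e1 := V kp Kkp; have b1 := hBmaj kp Kkp.
have := @tri3 _ Theta (psik (ktilde n w) (Pn n w)) (psik kp (Pn n w)) (psik kp P) (psi P).
have := ler_wpM2l C0 kminf.
lra.
Qed.
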